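(* Assume the setting below with $Y_i(0)=0$ for all $i$. Let $1\le k_1\le k_2\le\dots\le k_J\le N$, and for each $j$ let $$k_j(\alpha)=N_1-Q_{\mathrm H}(1-\alpha;N,N-k_j,N_1).$$ Then $$\Pr\Big(\bigcap_{j=1}^J\{\tau_{(k_j)}\ge y_{(k_j(\alpha))}\}\Big)\ \ge\ 1-\Pr\Big(\bigcup_{j=1}^J\Big\{\sum_{i=1}^N Z_i\mathbb{1}(i>k_j)>Q_{\mathrm H}(1-\alpha;N,N-k_j,N_1)\Big\}\Big).$$ Equality holds when all ITEs $\tau_1,\dots,\tau_N$ are distinct. On the right-hand side, $Z$ is the CRE assignment vector; the right-hand side depends only on $N,N_1,\alpha,k_1,\dots,k_J$.
   Context: Setting: - There are $N$ units with fixed potential outcomes $Y_i(1),Y_i(0)$ and ITE $\tau_i=Y_i(1)-Y_i(0)$. - The sorted ITEs are $\tau_{(1)}\le\dots\le\tau_{(N)}$. - CRE: the assignment vector $Z\in\{0,1\}^N$ is uniformly distributed over vectors with exactly $N_1$ ones, where $1\le N_1<N$. - The observed outcome is $Y_i=Z_iY_i(1)+(1-Z_i)Y_i(0)$. - $Q_{\mathrm H}(\theta;N,n,N_1)=\inf\{x:\Pr(X\le x)\ge\theta\}$ is the $\theta$-quantile of a Hypergeometric random variable $X$ with parameters $(N,n,N_1)$ (population size $N$, $n$ marked items, sample size $N_1$). - $y_{(1)}\le\dots\le y_{(N_1)}$ are the sorted observed outcomes of the treated units, with $y_{(0)}=-\infty$. *)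

(* Defs.v *)
From mathcomp Require Import all_boot all_order all_algebra.
Set Implicit Arguments. Unset Strict Implicit. Unset Printing Implicit Defensive.
Import Order.TTheory GRing.Theory Num.Theory.
Local Open Scope ring_scope.

Section CRE.
Variable R : realFieldType.

(* Probability of an event (a predicate on assignments) under the completely
   randomized experiment: Z, identified with the set of treated units, is uniform
   over the subsets of 'I_N of size N1. *)
Definition PrCRE (N N1 : nat) (E : pred {set 'I_N}) : R :=
  #|[set Z : {set 'I_N} | (#|Z| == N1) && E Z]|%:R /
  #|[set Z : {set 'I_N} | #|Z| == N1]|%:R.

(* CDF of a Hypergeometric(N, n, N1) variable X (population N, n marked items,
   sample size N1): Pr(X <= x) = sum_{i <= x} C(n,i) C(N-n,N1-i) / C(N,N1). *)
Definition hyperCDF (N n N1 x : nat) : R :=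
  \sum_(i < x.+1 | (i <= N1)%N) ('C(n, i) * 'C(N - n, N1 - i))%:R / ('C(N, N1))%:R.

(* Q_H(theta; N, n, N1) = inf {x : Pr(X <= x) >= theta}.  Since X is integer
   valued in [0, N1] and its CDF is a right-continuous step function, for
   0 < theta <= 1 this infimum is the least natural number x (necessarily <= N1)
   with Pr(X <= x) >= theta. *)
Definition hyperQ (theta : R) (N n N1 : nat) : nat :=
  find (fun x => theta <= hyperCDF N n N1 x) (iota 0 N1.+1).

(* k-th order statistic (1-indexed) of a finite list of reals; default 0 out
   of range (never used out of range in the statement). *)
Definition ordstat (s : seq R) (k : nat) : R := nth 0 (sort <=%R s) k.-1.

End CRE.

(* Main.v *)
Require Import Defs.
From mathcomp Require Import all_boot all_order all_algebra.
Import Order.TTheory GRing.Theory Num.Theory.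
Local Open Scope ring_scope.

From mathcomp Require Import ring lra zify.
Lemma sorted_nth_count (R : realFieldType) (t : seq R) (x : R) m :
  sorted <=%R t -> (0 < m <= size t)%N ->
  (nth 0 t m.-1 <= x) = (m <= count (fun y : R => (y <= x)%R) t)%N.
Proof.
elim: t m => [|a t IH] m /= St; first by case: m.
case/andP=> m0 msz.
have Ht : all (fun y => a <= y) t.
  by apply: (order_path_min (@le_trans _ _)).
have St' : sorted <=%R t by apply: (path_sorted St).
case: (lerP a x) => ax.
  case: m m0 msz => [//|[|m]] _ msz /=; first by rewrite ax.
  by rewrite (IH m.+1 St') ?ax //= add1n.
have c0 : count (fun y : R => (y <= x)%R) t = 0%N.
  rewrite (@eq_in_count _ _ pred0) ?count_pred0 // => y yt /=.
  by apply/negbTE; rewrite -ltNge (lt_le_trans ax) //; move/allP: Ht; apply.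
rewrite c0 /=.
case: m m0 msz => [//|[|m]] _ msz /=; first by rewrite leNgt ax.
by rewrite (IH m.+1 St') ?c0 //= leNgt ltnS ltn0.
Qed.

Lemma ordstat_count (R : realFieldType) (s : seq R) (x : R) m :
  (0 < m <= size s)%N ->
  (ordstat s m <= x) = (m <= count (fun y : R => (y <= x)%R) s)%N.
Proof.
move=> hm; rewrite /ordstat sorted_nth_count.
- by move/permP: (permEl (perm_sort <=%R s)) ->.
- by apply: sort_sorted; exact: le_total.
- by rewrite size_sort.
Qed.

Lemma count_card (T : finType) (P : pred T) : count P (enum T) = #|[set x | P x]|.
Proof. rewrite cardE /enum_mem size_filter -enumT count_filter; apply: eq_count => x /=. by rewrite !inE andbT. Qed.

Theorem proposition3 (R : realFieldType) (N N1 : nat) (Y1 Y0 : 'I_N -> R)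
    (alpha : R) (J : nat) (k : 'I_J -> nat) :
  (1 <= N1)%N -> (N1 < N)%N ->
  (forall i, Y0 i = 0) ->
  0 < alpha -> alpha < 1 ->
  (forall j, (1 <= k j)%N && (k j <= N)%N) ->
  (forall j1 j2 : 'I_J, (j1 <= j2)%N -> (k j1 <= k j2)%N) ->
  let tau := fun i => Y1 i - Y0 i in
  (* tau_(m): m-th smallest ITE *)
  let tau_ord := fun m => ordstat [seq tau i | i <- enum 'I_N] m in
  (* y_(m): m-th smallest observed outcome among treated units *)
  let Yobs := fun (Z : {set 'I_N}) i => if i \in Z then Y1 i else Y0 i in
  let y_ord := fun (Z : {set 'I_N}) m =>
    ordstat [seq Yobs Z i | i <- enum 'I_N & i \in Z] m in
  let Q := fun j => hyperQ (1 - alpha) N (N - k j) N1 in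
  let ka := fun j => (N1 - Q j)%N in
  (* event tau_(k_j) >= y_(k_j(alpha)), with y_(0) = -infinity *)
  let lhs := @PrCRE R N N1 (fun Z =>
    [forall j : 'I_J, (ka j == 0)%N || (y_ord Z (ka j) <= tau_ord (k j))]) in
  (* units are labelled 1..N; unit (i : 'I_N) has label i+1, so 1(label > k_j)
     is (k_j <= i) *)
  let rhs := 1 - @PrCRE R N N1 (fun Z =>
    [exists j : 'I_J, (Q j < #|[set i in Z | (k j <= i)%N]|)%N]) in
  rhs <= lhs /\ (injective tau -> lhs = rhs).
Proof.
move=> N1g0 N1ltN Y0z _ _ kP _ tau tau_ord Yobs y_ord Q ka lhs rhs.
set s := sort (fun a b : 'I_N => tau a <= tau b) (enum 'I_N).
have ss : size s = N by rewrite size_sort size_enum_ord.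
have us : uniq s by rewrite sort_uniq enum_uniq.
have sos : sorted (fun a b : 'I_N => tau a <= tau b) s.
  by apply: sort_sorted => a b; exact: le_total.
pose sg (r : 'I_N) : 'I_N := nth r s r.
have sg_inj : injective sg.
  move=> r1 r2; rewrite /sg (set_nth_default r1 r2) ?ss // => /eqP.
  by rewrite nth_uniq ?ss // => /eqP /val_inj.
have sg_mono : forall r1 r2 : 'I_N, (r1 <= r2)%N -> tau (sg r1) <= tau (sg r2).
  move=> r1 r2 le12; rewrite /sg (set_nth_default r1 r2) ?ss //.
  apply: (sorted_leq_nth _ _ r1 sos); rewrite ?inE ?ss //. all: try (by move=> a b c h1 h2; exact: le_trans h1 h2). all: try (by move=> a; exact: lexx).
have tau_sg : forall K (hK : (K.-1 < N)%N), tau_ord K = tau (sg (Ordinal hK)).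
  move=> K hK; rewrite /tau_ord /ordstat.
  rewrite -(map_sort (leT' := fun a b : 'I_N => tau a <= tau b)) //.
  by rewrite (nth_map (Ordinal hK)) ?size_sort ?size_enum_ord.
have key : forall (Z : {set 'I_N}) (j : 'I_J), #|Z| = N1 ->
  let hi := #|[set r | (sg r \in Z) && (k j <= r)%N]| in
  ((hi <= Q j)%N -> (ka j == 0)%N || (y_ord Z (ka j) <= tau_ord (k j))) /\
  (injective tau -> (ka j == 0)%N || (y_ord Z (ka j) <= tau_ord (k j)) -> (hi <= Q j)%N).
  move=> Z j cZ hi.
  have /andP [K1 KN] := kP j.
  have hK : ((k j).-1 < N)%N by lia.
  rewrite (tau_sg _ hK).
  set kk := Ordinal hK.
  set lo := #|[set r | (sg r \in Z) && (r < k j)%N]|.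
  have hilo : (hi + lo = N1)%N.
    rewrite -cZ -(card_preimset Z sg_inj) -(cardsID [set r : 'I_N | (k j <= r)%N]).
    rewrite /hi /lo; congr (_ + _)%N; apply: eq_card => r; rewrite !inE.
      by [].
    by rewrite -ltnNge andbC.
  set cnt := #|[set i | (i \in Z) && (tau i <= tau (sg kk))]|.
  have lo_cnt : (lo <= cnt)%N.
    rewrite /cnt -(card_preimset _ sg_inj); apply: subset_leq_card.
    apply/subsetP => r; rewrite !inE => /andP [rZ rlt]; rewrite rZ /=.
    apply: sg_mono; rewrite /=; lia.
  have cnt_lo : injective tau -> (cnt <= lo)%N.
    move=> tinj; rewrite /cnt -(card_preimset _ sg_inj); apply: subset_leq_card.
    apply/subsetP => r; rewrite !inE => /andP [rZ rle]; rewrite rZ /=.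
    rewrite ltnNge; apply/negP => Kr.
    have e : tau (sg kk) <= tau (sg r) by apply: sg_mono; rewrite /=; lia.
    have : sg r = sg kk by apply: tinj; apply/eqP; rewrite eq_le rle e.
    move/sg_inj => /(congr1 val) /=; lia.
  have evt : ((ka j == 0)%N || (y_ord Z (ka j) <= tau (sg kk))) = ((ka j == 0)%N || (ka j <= cnt)%N).
    case: eqP => //= ka0.
    have szt : size [seq Yobs Z i | i <- enum 'I_N & i \in Z] = N1.
      by rewrite size_map size_filter count_card -cZ; apply: eq_card => i; rewrite inE.
    rewrite /y_ord /= ordstat_count ?szt; last by apply/andP; split; rewrite /ka in ka0 *; lia.
    rewrite count_map count_filter count_card /cnt; congr (_ <= _)%N; apply: eq_card => i.
    rewrite !inE /Yobs /tau Y0z subr0.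
    by case: (i \in Z); rewrite ?andbF ?andbT.
  rewrite evt; split.
    move=> hq; case: (ltnP (Q j) N1) => hq1.
      apply/orP; right; rewrite /ka; lia.
    apply/orP; left; apply/eqP; rewrite /ka; lia.
  move=> ti /orP [/eqP k0 | h].
    rewrite /ka in k0; lia.
  have := cnt_lo ti; rewrite /ka in h; lia.
pose En (Z : {set 'I_N}) :=
  [exists j, (Q j < #|[set r | (sg r \in Z) && (k j <= r)%N]|)%N].
pose L (Z : {set 'I_N}) :=
  [forall j : 'I_J, (ka j == 0)%N || (y_ord Z (ka j) <= tau_ord (k j))].
have nE : #|[set Z : {set 'I_N} | (#|Z| == N1) &&
    [exists j : 'I_J, (Q j < #|[set i in Z | (k j <= i)%N]|)%N]]|
  = #|[set Z : {set 'I_N} | (#|Z| == N1) && En Z]|.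
  rewrite -(card_preimset [set Z : {set 'I_N} | (#|Z| == N1) && En Z] (imset_inj sg_inj)).
  apply: eq_card => Z; rewrite !inE (card_imset _ sg_inj).
  congr (_ && _); apply: eq_existsb => j; congr (_ < _)%N; apply: eq_card => r.
  by rewrite !inE (mem_imset _ _ sg_inj).
have part : forall P : pred {set 'I_N},
  (#|[set Z : {set 'I_N} | (#|Z| == N1) && P Z]| + #|[set Z : {set 'I_N} | (#|Z| == N1) && ~~ P Z]|
   = #|[set Z : {set 'I_N} | #|Z| == N1]|)%N.
  move=> P; rewrite -[RHS](cardsID [set Z : {set 'I_N} | P Z]); congr addn; apply: eq_card => Z.
    by rewrite !inE.
  by rewrite !inE andbC.
have sub : [set Z : {set 'I_N} | (#|Z| == N1) && ~~ En Z] \subset [set Z : {set 'I_N} | (#|Z| == N1) && L Z].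
  apply/subsetP => Z; rewrite !inE => /andP [/eqP cZ nEZ]; rewrite cZ eqxx /=.
  apply/forallP => j; have [h _] := key Z j cZ; apply: h.
  by move: nEZ; rewrite negb_exists => /forallP /(_ j); rewrite -leqNgt.
have sub2 : injective tau ->
    [set Z : {set 'I_N} | (#|Z| == N1) && L Z] \subset [set Z : {set 'I_N} | (#|Z| == N1) && ~~ En Z].
  move=> ti; apply/subsetP => Z; rewrite !inE => /andP [/eqP cZ LZ]; rewrite cZ eqxx /=.
  rewrite negb_exists; apply/forallP => j; rewrite -leqNgt.
  have [_ h] := key Z j cZ; apply: h ti _; by move/forallP: LZ; apply.
have Dpos : (0 < #|[set Z : {set 'I_N} | #|Z| == N1]|)%N.
  apply/card_gt0P; exists [set widen_ord (ltnW N1ltN) i | i : 'I_N1].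
  rewrite inE card_imset ?card_ord //.
  by move=> a b /(congr1 val) /= ab; apply: val_inj.
rewrite /lhs /rhs /PrCRE /= nE -(part En) -/(L).
rewrite -(part En) in Dpos.
move: Dpos (subset_leq_card sub) (fun h => subset_leq_card (sub2 h)).
set a := #|[set Z : {set 'I_N} | (#|Z| == N1) && En Z]|.
set b := #|[set Z : {set 'I_N} | (#|Z| == N1) && ~~ En Z]|.
set c := #|[set Z : {set 'I_N} | (#|Z| == N1) && L Z]|.
move=> Dpos bc cb.
have D0 : ((a + b)%N%:R : R) != 0 by rewrite pnatr_eq0 -lt0n.
have -> : 1 - a%:R / (a + b)%N%:R = b%:R / (a + b)%N%:R :> R.
  by move: D0; rewrite natrD => D0; field.
split.
  by apply: ler_wpM2r; [rewrite invr_ge0 ler0n | rewrite ler_nat].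
by move=> ti; have := cb ti => cb'; have -> : c = b by apply/eqP; rewrite eqn_leq bc cb'.
Qed.
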